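(* Let $T_0$ be a nondegenerate, non-equilateral triangle and let $\mathcal{F}$ be its Brocard porism. For every triangle $T=(A,B,C)\in\mathcal{F}$, listed counterclockwise, all of whose angles are less than $120^\circ$, let $F_a,F_b,F_c$ be its flank triangles. Then the lines $A\,X_{15}(F_a)$, $B\,X_{15}(F_b)$, $C\,X_{15}(F_c)$ concur at the fixed point $X_6(T_0)$, which is independent of $T\in\mathcal{F}$.
   Context: Brocard porism. Let $\Gamma$ be the circumcircle of $T_0$ and $K$ its Brocard inellipse, the ellipse inscribed in $T_0$ whose foci are the two Brocard points of $T_0$. The Brocard porism is the one-parameter (Poncelet) family of triangles inscribed in $\Gamma$ and circumscribed about $K$. It is known that all its members have the same symmedian point $X_6$ as $T_0$. Flank triangles. Identify the plane with $\mathbb{C}$ and put $\rho=e^{2\pi i/3}$. For a counterclockwise triangle $(A,B,C)$, the flank triangles are: $F_a$ with vertices $A,\ A+\rho(C-A),\ A+\rho^{-1}(B-A)$; $F_b$ with vertices $B,\ B+\rho(A-B),\ B+\rho^{-1}(C-B)$; $F_c$ with vertices $C,\ C+\rho(B-C),\ C+\rho^{-1}(A-C)$. These are the triangles between consecutive regular hexagons erected outwardly on the sides. Triangle centers. For a nondegenerate triangle with vertices $V_1,V_2,V_3$, let $\ell_i$ be the length of the side opposite $V_i$ and $\theta_i$ the angle at $V_i$. In homogeneous barycentric coordinates, $X_6=(\ell_1^2:\ell_2^2:\ell_3^2)$ and $X_{15}=(\ell_1\sin(\theta_1+\pi/3):\ell_2\sin(\theta_2+\pi/3):\ell_3\sin(\theta_3+\pi/3))$.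 *)

(* Defs.v *)
From Stdlib Require Import Reals Lra.
From Coquelicot Require Import Coquelicot.
Open Scope R_scope.

Definition dist (P Q : C) : R := Cmod (P - Q)%C.
Definition dot (u v : C) : R := fst u * fst v + snd u * snd v.
Definition cross (u v : C) : R := fst u * snd v - snd u * fst v.

Definition nondegenerate (A B C0 : C) : Prop := cross (B - A)%C (C0 - A)%C <> 0.
Definition ccw (A B C0 : C) : Prop := cross (B - A)%C (C0 - A)%C > 0.
Definition equilateral (A B C0 : C) : Prop :=
  dist A B = dist B C0 /\ dist B C0 = dist C0 A.

Definition angle_at (V P Q : C) : R :=
  acos (dot (P - V)%C (Q - V)%C / (Cmod (P - V)%C * Cmod (Q - V)%C)).

Definition bary (w1 w2 w3 : R) (V1 V2 V3 : C) : C :=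
  ((RtoC w1 * V1 + RtoC w2 * V2 + RtoC w3 * V3) / RtoC (w1 + w2 + w3))%C.

Definition X6 (V1 V2 V3 : C) : C :=
  bary (dist V2 V3 ^ 2) (dist V3 V1 ^ 2) (dist V1 V2 ^ 2) V1 V2 V3.

Definition X15 (V1 V2 V3 : C) : C :=
  bary (dist V2 V3 * sin (angle_at V1 V2 V3 + PI / 3))
       (dist V3 V1 * sin (angle_at V2 V3 V1 + PI / 3))
       (dist V1 V2 * sin (angle_at V3 V1 V2 + PI / 3)) V1 V2 V3.

Definition rho : C := (cos (2 * PI / 3), sin (2 * PI / 3)).

Definition flank_a (A B C0 : C) : C * C * C :=
  (A, (A + rho * (C0 - A))%C, (A + / rho * (B - A))%C).
Definition flank_b (A B C0 : C) : C * C * C :=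
  (B, (B + rho * (A - B))%C, (B + / rho * (C0 - B))%C).
Definition flank_c (A B C0 : C) : C * C * C :=
  (C0, (C0 + rho * (B - C0))%C, (C0 + / rho * (A - C0))%C).

Definition X15t (T : C * C * C) : C :=
  let '(V1, V2, V3) := T in X15 V1 V2 V3.

Definition collinear (P Q R0 : C) : Prop := cross (Q - P)%C (R0 - P)%C = 0.

Definition in_closed_triangle (X A B C0 : C) : Prop :=
  exists u v w : R, 0 <= u /\ 0 <= v /\ 0 <= w /\ u + v + w = 1 /\
    X = (RtoC u * A + RtoC v * B + RtoC w * C0)%C.
Definition in_open_triangle (X A B C0 : C) : Prop :=
  exists u v w : R, 0 < u /\ 0 < v /\ 0 < w /\ u + v + w = 1 /\
    X = (RtoC u * A + RtoC v * B + RtoC w * C0)%C.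
Definition on_segment (X P Q : C) : Prop :=
  exists t : R, 0 <= t <= 1 /\ X = (P + RtoC t * (Q - P))%C.

Definition first_brocard_point (O A B C0 : C) : Prop :=
  in_open_triangle O A B C0 /\
  angle_at A O B = angle_at B O C0 /\ angle_at B O C0 = angle_at C0 O A.
Definition second_brocard_point (O A B C0 : C) : Prop :=
  in_open_triangle O A B C0 /\
  angle_at B O A = angle_at C0 O B /\ angle_at C0 O B = angle_at A O C0.

Definition on_ellipse (F1 F2 : C) (s : R) (X : C) : Prop :=
  dist X F1 + dist X F2 = s.

Definition ellipse_inscribed (F1 F2 : C) (s : R) (A B C0 : C) : Prop :=
  dist F1 F2 < s /\
  (forall X, on_ellipse F1 F2 s X -> in_closed_triangle X A B C0) /\
  (exists X, on_ellipse F1 F2 s X /\ on_segment X B C0) /\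
  (exists X, on_ellipse F1 F2 s X /\ on_segment X C0 A) /\
  (exists X, on_ellipse F1 F2 s X /\ on_segment X A B).

Definition brocard_inellipse (F1 F2 : C) (s : R) (A0 B0 C0 : C) : Prop :=
  first_brocard_point F1 A0 B0 C0 /\ second_brocard_point F2 A0 B0 C0 /\
  ellipse_inscribed F1 F2 s A0 B0 C0.

Definition circumcircle (O : C) (r : R) (A0 B0 C0 : C) : Prop :=
  0 < r /\ dist A0 O = r /\ dist B0 O = r /\ dist C0 O = r.

Definition in_brocard_porism (O : C) (r : R) (F1 F2 : C) (s : R)
    (A B C0 : C) : Prop :=
  nondegenerate A B C0 /\
  dist A O = r /\ dist B O = r /\ dist C0 O = r /\
  ellipse_inscribed F1 F2 s A B C0.

(* Main.v *)
Require Import Defs.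
From Stdlib Require Import Reals.
From Coquelicot Require Import Coquelicot.
From Stdlib Require Import Lra Field.
Open Scope R_scope.


Lemma bary_fst w1 w2 w3 V1 V2 V3 : w1+w2+w3 <> 0 ->
  fst (bary w1 w2 w3 V1 V2 V3) = (w1*fst V1 + w2*fst V2 + w3*fst V3)/(w1+w2+w3).
Proof. destruct V1, V2, V3; intros H; unfold bary; simpl; field; auto. Qed.
Lemma bary_snd w1 w2 w3 V1 V2 V3 : w1+w2+w3 <> 0 ->
  snd (bary w1 w2 w3 V1 V2 V3) = (w1*snd V1 + w2*snd V2 + w3*snd V3)/(w1+w2+w3).
Proof. destruct V1, V2, V3; intros H; unfold bary; simpl; field; auto. Qed.

Lemma bary_scale k w1 w2 w3 V1 V2 V3 : k <> 0 -> w1+w2+w3 <> 0 ->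
  bary (k*w1) (k*w2) (k*w3) V1 V2 V3 = bary w1 w2 w3 V1 V2 V3.
Proof.
  intros Hk H. assert (H' : k*w1+k*w2+k*w3 <> 0).
  { replace (k*w1+k*w2+k*w3) with (k*(w1+w2+w3)) by ring. apply Rmult_integral_contrapositive; auto. }
  apply injective_projections.
  - rewrite !bary_fst by auto. field. auto.
  - rewrite !bary_snd by auto. field. auto.
Qed.

Lemma Cmod_pos_sq (z : C) : Cmod z ^ 2 = fst z ^2 + snd z ^2.
Proof. unfold Cmod. rewrite pow2_sqrt; [auto| nra]. Qed.

Lemma lagrange (u v : C) : dot u v ^2 + cross u v ^2 = (fst u^2+snd u^2)*(fst v^2+snd v^2).
Proof. unfold dot, cross. ring. Qed.

Lemma sin_angle (V P Q : C) :
  0 < Cmod (P - V)%C -> 0 < Cmod (Q - V)%C ->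
  sin (angle_at V P Q + PI/3) =
  (Rabs (cross (P-V)%C (Q-V)%C) + sqrt 3 * dot (P-V)%C (Q-V)%C) / (2 * Cmod (P-V)%C * Cmod (Q-V)%C).
Proof.
  intros Hn Hm. unfold angle_at.
  set (n := Cmod (P-V)%C) in *. set (m := Cmod (Q-V)%C) in *.
  set (d := dot (P-V)%C (Q-V)%C). set (c := cross (P-V)%C (Q-V)%C).
  assert (HL : d^2 + c^2 = n^2*m^2).
  { unfold d, c, n, m. rewrite !Cmod_pos_sq. apply lagrange. }
  assert (Hnm : 0 < n*m) by (apply Rmult_lt_0_compat; auto).
  assert (Hx : -1 <= d/(n*m) <= 1).
  { assert (Hd : d^2 <= (n*m)^2) by nra.
    split.
    - apply (Rmult_le_reg_r (n*m)); auto. field_simplify; try lra. nra.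
    - apply (Rmult_le_reg_r (n*m)); auto. field_simplify; try lra. nra. }
  rewrite sin_plus, sin_acos, cos_acos by auto. rewrite sin_PI3, cos_PI3.
  assert (Hs : sqrt (1 - (d/(n*m))²) = Rabs c / (n*m)).
  { replace (1 - (d/(n*m))²) with ((Rabs c/(n*m))²).
    - rewrite sqrt_Rsqr; auto. apply Rdiv_le_0_compat; auto. apply Rabs_pos.
    - unfold Rsqr. assert (Hc : Rabs c * Rabs c = n^2*m^2 - d^2).
      { rewrite <- Rabs_mult. rewrite Rabs_right by nra. nra. }
      replace (Rabs c / (n * m) * (Rabs c / (n * m))) with ((Rabs c * Rabs c)/((n*m)*(n*m))) by (field; lra).
      rewrite Hc. field. lra. }
  rewrite Hs. field. lra.
Qed.

Lemma Cmod_sym (a b : C) : Cmod (a - b)%C = Cmod (b - a)%C.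
Proof. destruct a, b. unfold Cmod; simpl. f_equal. ring. Qed.

Lemma Cmod_pos_of_cross (a b : C) (z : C) : cross (b - a)%C z <> 0 -> 0 < Cmod (b - a)%C.
Proof.
  intros H. destruct a as [ax ay], b as [bx by0], z as [zx zy]. unfold Cmod, cross in *; simpl in *.
  apply sqrt_lt_R0. destruct (Req_dec (bx + - ax) 0) as [E1|E1].
  - destruct (Req_dec (by0 + - ay) 0) as [E2|E2].
    + exfalso. apply H. rewrite E1, E2. ring.
    + assert (0 < (by0 + - ay)^2) by (apply pow2_gt_0; auto).
      assert (0 <= (bx + - ax)^2) by (apply pow2_ge_0). lra.
  - assert (0 < (bx + - ax)^2) by (apply pow2_gt_0; auto).
    assert (0 <= (by0 + - ay)^2) by (apply pow2_ge_0). lra.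
Qed.

Definition wX15 (V1 V2 V3 : C) : R * R * R :=
  let cr := Rabs (cross (V2 - V1)%C (V3 - V1)%C) in
  let L1 := fst (V2-V3)%C ^2 + snd (V2-V3)%C ^2 in
  let L2 := fst (V3-V1)%C ^2 + snd (V3-V1)%C ^2 in
  let L3 := fst (V1-V2)%C ^2 + snd (V1-V2)%C ^2 in
  (L1 * (cr + sqrt 3 * dot (V2-V1)%C (V3-V1)%C),
   L2 * (cr + sqrt 3 * dot (V3-V2)%C (V1-V2)%C),
   L3 * (cr + sqrt 3 * dot (V1-V3)%C (V2-V3)%C)).

Lemma sqrt3_pos : 0 < sqrt 3.
Proof. apply sqrt_lt_R0. lra. Qed.

Lemma wsum_id (V1 V2 V3 : C) :
  (fst (V2-V3)%C ^2 + snd (V2-V3)%C ^2) * dot (V2-V1)%C (V3-V1)%C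
  + (fst (V3-V1)%C ^2 + snd (V3-V1)%C ^2) * dot (V3-V2)%C (V1-V2)%C
  + (fst (V1-V2)%C ^2 + snd (V1-V2)%C ^2) * dot (V1-V3)%C (V2-V3)%C
  = 2 * cross (V2 - V1)%C (V3 - V1)%C ^ 2.
Proof. destruct V1, V2, V3. unfold dot, cross, Cminus, Cplus, Copp. cbn [fst snd]. ring. Qed.

Lemma wX15_sum_pos V1 V2 V3 : cross (V2 - V1)%C (V3 - V1)%C <> 0 ->
  let '(a,b,c) := wX15 V1 V2 V3 in 0 < a + b + c.
Proof.
  intros H. unfold wX15. pose proof (wsum_id V1 V2 V3) as Hid.
  set (cr := cross (V2 - V1)%C (V3 - V1)%C) in *.
  assert (Hc : 0 < Rabs cr) by (apply Rabs_pos_lt; auto).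
  assert (Hk2 : Rabs cr * Rabs cr = cr^2).
  { rewrite <- Rabs_mult. rewrite Rabs_right by nra. ring. }
  set (s := sqrt 3). assert (Hs : 0 < s) by apply sqrt3_pos.
  set (L1 := fst (V2-V3)%C ^2 + snd (V2-V3)%C ^2) in *.
  set (L2 := fst (V3-V1)%C ^2 + snd (V3-V1)%C ^2) in *.
  set (L3 := fst (V1-V2)%C ^2 + snd (V1-V2)%C ^2) in *.
  set (d1 := dot (V2-V1)%C (V3-V1)%C) in *.
  set (d2 := dot (V3-V2)%C (V1-V2)%C) in *.
  set (d3 := dot (V1-V3)%C (V2-V3)%C) in *.
  assert (0 <= L1) by (unfold L1; nra). assert (0 <= L2) by (unfold L2; nra). assert (0 <= L3) by (unfold L3; nra).
  replace (L1*(Rabs cr + s*d1) + L2*(Rabs cr+s*d2) + L3*(Rabs cr+s*d3)) with (Rabs cr*(L1+L2+L3) + s*(2*(Rabs cr*Rabs cr))) by (rewrite Hk2, <- Hid; ring).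
  assert (0 < Rabs cr * Rabs cr) by nra.
  nra.
Qed.

Lemma cross_cyc2 (V1 V2 V3 : C) : cross (V3 - V2)%C (V1 - V2)%C = cross (V2 - V1)%C (V3 - V1)%C.
Proof. destruct V1, V2, V3. unfold cross, Cminus, Cplus, Copp. cbn [fst snd]. ring. Qed.
Lemma cross_cyc3 (V1 V2 V3 : C) : cross (V1 - V3)%C (V2 - V3)%C = cross (V2 - V1)%C (V3 - V1)%C.
Proof. destruct V1, V2, V3. unfold cross, Cminus, Cplus, Copp. cbn [fst snd]. ring. Qed.

Lemma X15_eq V1 V2 V3 : cross (V2 - V1)%C (V3 - V1)%C <> 0 ->
  X15 V1 V2 V3 = let '(a,b,c) := wX15 V1 V2 V3 in bary a b c V1 V2 V3.
Proof.
  intros H. pose proof (wX15_sum_pos V1 V2 V3 H) as Hp. unfold wX15 in *.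
  unfold X15, Defs.dist.
  assert (H2 : cross (V3 - V2)%C (V1 - V2)%C <> 0) by (rewrite cross_cyc2; auto).
  assert (H3 : cross (V1 - V3)%C (V2 - V3)%C <> 0) by (rewrite cross_cyc3; auto).
  assert (P21 := Cmod_pos_of_cross _ _ _ H).
  assert (P31 : 0 < Cmod (V3 - V1)%C).
  { apply (Cmod_pos_of_cross _ _ (V2 - V1)%C). intro E. apply H.
    destruct V1, V2, V3. unfold cross, Cminus, Cplus, Copp in *. cbn [fst snd] in *. lra. }
  assert (P32 := Cmod_pos_of_cross _ _ _ H2).
  assert (P12 : 0 < Cmod (V1 - V2)%C).
  { apply (Cmod_pos_of_cross _ _ (V3 - V2)%C). intro E. apply H2.
    destruct V1, V2, V3. unfold cross, Cminus, Cplus, Copp in *. cbn [fst snd] in *. lra. }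
  rewrite !sin_angle; try (rewrite Cmod_sym; assumption); try assumption.
  rewrite (cross_cyc2 V1 V2 V3), (cross_cyc3 V1 V2 V3).
  set (k := 1/(2 * Cmod (V2 - V3)%C * Cmod (V3 - V1)%C * Cmod (V1 - V2)%C)).
  assert (Hk : k <> 0).
  { unfold k. apply Rgt_not_eq, Rdiv_lt_0_compat; [lra|].
    repeat apply Rmult_lt_0_compat; try lra; auto. rewrite Cmod_sym; auto. }
  match goal with |- _ = bary ?a ?b ?c _ _ _ => rewrite <- (bary_scale k a b c) by (auto; lra) end.
  assert (Q1 : Cmod (V2 - V3)%C ^2 = fst (V2 - V3)%C ^ 2 + snd (V2 - V3)%C ^ 2) by apply Cmod_pos_sq.
  assert (Q2 : Cmod (V3 - V1)%C ^2 = fst (V3 - V1)%C ^ 2 + snd (V3 - V1)%C ^ 2) by apply Cmod_pos_sq.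
  assert (Q3 : Cmod (V1 - V2)%C ^2 = fst (V1 - V2)%C ^ 2 + snd (V1 - V2)%C ^ 2) by apply Cmod_pos_sq.
  rewrite <- Q1, <- Q2, <- Q3.
  rewrite (Cmod_sym V3 V2), (Cmod_sym V2 V1), (Cmod_sym V1 V3).
  assert (P23 : 0 < Cmod (V2 - V3)%C) by (rewrite Cmod_sym; auto).
  f_equal; unfold k; field; repeat split; lra.
Qed.

Lemma cos2PI3 : cos (2*PI/3) = -1/2.
Proof. replace (2*PI/3) with (PI - PI/3) by field. rewrite Rtrigo_facts.cos_pi_minus, cos_PI3. lra. Qed.
Lemma sin2PI3 : sin (2*PI/3) = sqrt 3/2.
Proof. replace (2*PI/3) with (PI - PI/3) by field. rewrite Rtrigo_facts.sin_pi_minus, sin_PI3. lra. Qed.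
Lemma sqrt3_sq : sqrt 3 ^ 2 = 3.
Proof. apply pow2_sqrt. lra. Qed.
Lemma rho_eq : rho = (-1/2, sqrt 3/2).
Proof. unfold rho. rewrite cos2PI3, sin2PI3. auto. Qed.
Lemma rhoinv_eq : (/ rho)%C = (-1/2, - (sqrt 3/2)).
Proof. rewrite rho_eq. unfold Cinv. cbn [fst snd].
  assert (E : (-1/2)^2 + (sqrt 3/2)^2 = 1) by (replace ((sqrt 3/2)^2) with (sqrt 3 ^2/4) by field; rewrite sqrt3_sq; field).
  rewrite E. f_equal; lra. Qed.

Lemma cos_bound_of (n m d c : R) : 0 < n -> 0 < m -> d^2 + c^2 = n^2*m^2 -> -1 <= d/(n*m) <= 1.
Proof.
  intros Hn Hm HL. assert (Hnm : 0 < n*m) by (apply Rmult_lt_0_compat; auto).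
  assert (Hd : d^2 <= (n*m)^2) by nra.
  split.
  - apply (Rmult_le_reg_r (n*m)); auto. field_simplify; try lra. nra.
  - apply (Rmult_le_reg_r (n*m)); auto. field_simplify; try lra. nra.
Qed.

Lemma angle_lt_120 (V P Q : C) : 0 < Cmod (P - V)%C -> 0 < Cmod (Q - V)%C ->
  angle_at V P Q < 2*PI/3 -> 0 < Cmod (P - V)%C * Cmod (Q - V)%C + 2 * dot (P - V)%C (Q - V)%C.
Proof.
  intros Hn Hm Ha. unfold angle_at in Ha.
  set (n := Cmod (P-V)%C) in *. set (m := Cmod (Q-V)%C) in *.
  set (d := dot (P-V)%C (Q-V)%C) in *.
  assert (HL : d^2 + (cross (P-V)%C (Q-V)%C)^2 = n^2*m^2).
  { unfold d, n, m. rewrite !Cmod_pos_sq. apply lagrange. }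
  pose proof (cos_bound_of n m d _ Hn Hm HL) as Hb.
  pose proof (acos_bound (d/(n*m))) as Hr.
  assert (Hc : cos (2*PI/3) < cos (acos (d/(n*m)))).
  { pose proof PI_RGT_0. apply cos_decreasing_1; lra. }
  rewrite cos_acos in Hc by auto. rewrite cos2PI3 in Hc.
  assert (Hnm : 0 < n*m) by (apply Rmult_lt_0_compat; auto).
  apply (Rmult_lt_compat_r (n*m)) in Hc; auto.
  replace (d / (n*m) * (n*m)) with d in Hc by (field; lra). lra.
Qed.

Lemma collinear_bary (A V2 V3 B C0 : C) w1 w2 w3 u1 u2 u3 : w1+w2+w3 <> 0 -> u1+u2+u3 <> 0 ->
 (w2*(fst V2 - fst A) + w3*(fst V3 - fst A)) * (u2*(snd B - snd A) + u3*(snd C0 - snd A))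
 - (w2*(snd V2 - snd A) + w3*(snd V3 - snd A))*(u2*(fst B - fst A) + u3*(fst C0 - fst A)) = 0 ->
 collinear A (bary w1 w2 w3 A V2 V3) (bary u1 u2 u3 A B C0).
Proof.
  intros Hw Hu H. unfold collinear, cross.
  unfold Cminus, Cplus, Copp. cbn [fst snd].
  rewrite !bary_fst, !bary_snd by auto.
  match type of H with ?E = 0 =>
  transitivity (E / ((w1+w2+w3)*(u1+u2+u3))) end.
  - field. auto.
  - rewrite H. field. auto.
Qed.

Lemma flank_collinear (A B C0 : C) : ccw A B C0 -> angle_at A B C0 < 2*PI/3 ->
  collinear A (X15t (flank_a A B C0)) (X6 A B C0).
Proof.
  intros Hccw Hang. unfold ccw in Hccw.
  set (S := cross (B - A)%C (C0 - A)%C) in *.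
  assert (HnB : 0 < Cmod (B - A)%C) by (apply (Cmod_pos_of_cross _ _ (C0 - A)%C); fold S; lra).
  assert (HnC : 0 < Cmod (C0 - A)%C).
  { apply (Cmod_pos_of_cross _ _ (B - A)%C). intro E. unfold S in Hccw.
    destruct A, B, C0. unfold cross, Cminus, Cplus, Copp in *. cbn [fst snd] in *. lra. }
  pose proof (angle_lt_120 A B C0 HnB HnC Hang) as Hd.
  set (d := dot (B - A)%C (C0 - A)%C) in *.
  set (n := Cmod (B - A)%C) in *. set (m := Cmod (C0 - A)%C) in *.
  assert (HL : d^2 + S^2 = n^2*m^2).
  { unfold d, n, m, S. rewrite !Cmod_pos_sq. apply lagrange. }
  assert (Hs := sqrt3_pos). assert (Hs2 := sqrt3_sq). set (s := sqrt 3) in *.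
  assert (Hpos : 0 < S + s * d).
  { destruct (Rle_or_lt 0 d).
    - nra.
    - assert (0 < n*m) by (apply Rmult_lt_0_compat; auto).
      assert (4*d^2 < n^2*m^2) by nra.
      assert ((s*d)^2 < S^2) by nra.
      nra. }
  unfold flank_a, X15t. rewrite rhoinv_eq, rho_eq. fold s.
  set (V2 := (A + ((-1/2)%R, (s/2)%R) * (C0 - A))%C).
  set (V3 := (A + ((-1/2)%R, (- (s/2))%R) * (B - A))%C).
  assert (Hcr : cross (V2 - A)%C (V3 - A)%C = (S + s * d)/2).
  { transitivity (((1 - s^2)/4)*(-S) + s/2*d).
    - unfold V2, V3, S, d. destruct A, B, C0. unfold dot, cross, Cminus, Cplus, Copp, Cmult. cbn [fst snd]. field.
    - rewrite Hs2. field. }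
  assert (Hcr0 : cross (V2 - A)%C (V3 - A)%C <> 0) by lra.
  pose proof (wX15_sum_pos A V2 V3 Hcr0) as Hw.
  rewrite X15_eq by auto. unfold wX15 in *. rewrite Rabs_right in * by lra.
  unfold X6, Defs.dist. rewrite !Cmod_pos_sq.
  set (W1 := (fst (V2 - V3)%C ^ 2 + snd (V2 - V3)%C ^ 2) * (cross (V2 - A)%C (V3 - A)%C + s * dot (V2 - A)%C (V3 - A)%C)) in *.
  set (W2 := (fst (V3 - A)%C ^ 2 + snd (V3 - A)%C ^ 2) * (cross (V2 - A)%C (V3 - A)%C + s * dot (V3 - V2)%C (A - V2)%C)) in *.
  set (W3 := (fst (A - V2)%C ^ 2 + snd (A - V2)%C ^ 2) * (cross (V2 - A)%C (V3 - A)%C + s * dot (A - V3)%C (V2 - V3)%C)) in *.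
  assert (Hn2 : 0 < n^2) by nra.
  assert (Hl : 0 < fst (B - C0)%C ^ 2 + snd (B - C0)%C ^ 2 + (fst (C0 - A)%C ^ 2 + snd (C0 - A)%C ^ 2) +
     (fst (A - B)%C ^ 2 + snd (A - B)%C ^ 2)).
  { unfold n in Hn2. rewrite Cmod_pos_sq in Hn2.
    assert (E : fst (A - B)%C ^ 2 + snd (A - B)%C ^ 2 = fst (B - A)%C ^ 2 + snd (B - A)%C ^ 2)
      by (destruct A, B; unfold Cminus, Cplus, Copp; cbn [fst snd]; ring).
    assert (0 <= fst (B - C0)%C ^ 2 + snd (B - C0)%C ^ 2) by nra.
    assert (0 <= fst (C0 - A)%C ^ 2 + snd (C0 - A)%C ^ 2) by nra. lra. }
  apply collinear_bary; [lra | lra |].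
  unfold V2, V3.
  destruct A as [a1 a2], B as [b1 b2], C0 as [c1 c2].
  unfold dot, cross, Cminus, Cplus, Copp, Cmult. cbn [fst snd].
  fold s. field.
Qed.


Lemma cont_sq (a b c d : R) : forall x, continuous (fun t => sqrt ((a + t*b)^2 + (c + t*d)^2)) x.
Proof. intros x. apply (continuous_sqrt_comp (fun t => (a+t*b)^2+(c+t*d)^2)). apply (@ex_derive_continuous R_AbsRing R_NormedModule). auto_derive. auto. Qed.
Lemma cont_g (a b c d a' b' c' d' s : R) : continuity (fun t => sqrt ((a + t*b)^2 + (c + t*d)^2) + sqrt ((a' + t*b')^2 + (c' + t*d')^2) - s).
Proof. intros x. apply continuity_pt_filterlim.
  apply (continuous_minus (fun t => sqrt ((a + t*b)^2 + (c + t*d)^2) + sqrt ((a' + t*b')^2 + (c' + t*d')^2)) (fun _ => s)).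
  - apply (continuous_plus (fun t => sqrt ((a + t*b)^2 + (c + t*d)^2)) (fun t => sqrt ((a' + t*b')^2 + (c' + t*d')^2))); apply cont_sq.
  - apply continuous_const.
Qed.

Lemma dist_ge0 X Y : 0 <= Defs.dist X Y.
Proof. apply Cmod_ge_0. Qed.

Lemma dist_self F : Defs.dist F F = 0.
Proof. destruct F. unfold Defs.dist, Cmod, Cminus, Cplus, Copp. cbn [fst snd].
  replace ((r + - r)^2 + (r0 + - r0)^2) with 0 by ring. apply sqrt_0. Qed.

Lemma inside_strict (F1 F2 P Q Z : C) (s sg : R) : sg <> 0 ->
  0 < fst (Q - P)%C ^2 + snd (Q - P)%C ^2 ->
  (forall X, on_ellipse F1 F2 s X -> 0 <= sg * cross (Q - P)%C (X - P)%C) ->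
  Defs.dist Z F1 + Defs.dist Z F2 < s -> 0 < sg * cross (Q - P)%C (Z - P)%C.
Proof.
  intros Hsg Hl Hell HZ.
  destruct (Rlt_or_le 0 (sg * cross (Q - P)%C (Z - P)%C)) as [h|h]; auto. exfalso.
  set (qx := fst (Q - P)%C) in *. set (qy := snd (Q - P)%C) in *.
  set (m := (sg * qy, - (sg * qx)) : C).
  set (Y := fun t : R => (Z + RtoC t * m)%C).
  set (g := fun t => sqrt ((fst Z - fst F1 + t * fst m)^2 + (snd Z - snd F1 + t * snd m)^2)
                   + sqrt ((fst Z - fst F2 + t * fst m)^2 + (snd Z - snd F2 + t * snd m)^2) - s).
  assert (Hg : forall t, g t = Defs.dist (Y t) F1 + Defs.dist (Y t) F2 - s).
  { intros t. unfold g, Y, Defs.dist, Cmod. unfold m; destruct Z, F1, F2. cbv [Cplus Cminus Copp Cmult RtoC fst snd].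
    f_equal. f_equal; f_equal; ring. }
  assert (Hm2 : Cmod m ^ 2 = sg^2 * (qx^2 + qy^2)).
  { rewrite Cmod_pos_sq. unfold m. cbn [fst snd]. ring. }
  assert (Hm : 0 < Cmod m).
  { destruct (Rle_lt_or_eq_dec 0 (Cmod m) (Cmod_ge_0 m)) as [h'|h']; auto.
    rewrite <- h' in Hm2. assert (0 < sg^2) by (apply pow2_gt_0; auto). nra. }
  set (T := (s + Cmod (F1 - Z)%C + 1) / Cmod m).
  assert (HF1Z := Cmod_ge_0 (F1 - Z)%C).
  assert (Hs0 : 0 <= s).
  { pose proof (dist_ge0 Z F1). pose proof (dist_ge0 Z F2). lra. }
  assert (HT : 0 < T) by (unfold T; apply Rdiv_lt_0_compat; lra).
  assert (Hg0 : g 0 < 0).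
  { rewrite Hg. unfold Y. replace (Z + RtoC 0 * m)%C with Z.
    - lra.
    - unfold m; destruct Z. cbv [Cplus Cminus Copp Cmult RtoC fst snd]. f_equal; ring. }
  assert (HgT : 0 < g T).
  { rewrite Hg.
    assert (E : (RtoC T * m)%C = ((Y T - F1) + (F1 - Z))%C).
    { unfold Y. unfold m; destruct Z, F1. cbv [Cplus Cminus Copp Cmult RtoC fst snd]. f_equal; ring. }
    pose proof (Cmod_triangle (Y T - F1)%C (F1 - Z)%C) as Ht. rewrite <- E in Ht.
    rewrite Cmod_mult, Cmod_R, Rabs_right in Ht by lra.
    unfold T in Ht. replace ((s + Cmod (F1 - Z) + 1) / Cmod m * Cmod m) with (s + Cmod (F1 - Z) + 1) in Ht by (field; lra).
    fold T in Ht. pose proof (dist_ge0 (Y T) F2). unfold Defs.dist in *. lra. }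
  destruct (IVT g 0 T) as [t [[Ht0 HtT] Ht]].
  { unfold g. apply cont_g. }
  { lra. } { auto. } { auto. }
  assert (Htp : 0 < t).
  { destruct (Rle_lt_or_eq_dec 0 t Ht0) as [h'|h']; auto. subst t. lra. }
  assert (HY : on_ellipse F1 F2 s (Y t)).
  { unfold on_ellipse. rewrite Hg in Ht. lra. }
  specialize (Hell _ HY).
  assert (Ec : cross (Q - P)%C (Y t - P)%C = cross (Q - P)%C (Z - P)%C - t * sg * (qx^2 + qy^2)).
  { unfold Y, m, qx, qy. destruct Z, P, Q. unfold cross; cbv [Cplus Cminus Copp Cmult RtoC fst snd]. ring. }
  rewrite Ec in Hell.
  assert (0 < sg^2) by (apply pow2_gt_0; auto).
  assert (0 < t * (sg^2 * (qx^2+qy^2))) by (apply Rmult_lt_0_compat; auto; apply Rmult_lt_0_compat; auto).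
  nra.
Qed.

Lemma dist_sym X Y : Defs.dist X Y = Defs.dist Y X.
Proof. unfold Defs.dist. apply Cmod_sym. Qed.

Lemma tangency (F1 F2 P Q : C) (s sg : R) :
  Defs.dist F1 F2 < s -> sg <> 0 ->
  0 < fst (Q - P)%C ^2 + snd (Q - P)%C ^2 ->
  (forall X, on_ellipse F1 F2 s X -> 0 <= sg * cross (Q - P)%C (X - P)%C) ->
  (exists X, on_ellipse F1 F2 s X /\ cross (Q - P)%C (X - P)%C = 0) ->
  0 < sg * cross (Q - P)%C (F1 - P)%C /\ 0 < sg * cross (Q - P)%C (F2 - P)%C /\
  4 * (cross (Q - P)%C (F1 - P)%C * cross (Q - P)%C (F2 - P)%C)
   = (s^2 - Defs.dist F1 F2 ^2) * (fst (Q - P)%C ^2 + snd (Q - P)%C ^2).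
Proof.
  intros Hd Hsg Hl Hell [X0 [HX0 HX0l]].
  assert (H1 : 0 < sg * cross (Q - P)%C (F1 - P)%C).
  { apply (inside_strict F1 F2 P Q F1 s sg); auto. rewrite dist_self. lra. }
  assert (H2 : 0 < sg * cross (Q - P)%C (F2 - P)%C).
  { apply (inside_strict F1 F2 P Q F2 s sg); auto. rewrite dist_self, dist_sym. lra. }
  assert (Hline : forall Y, cross (Q - P)%C (Y - P)%C = 0 -> s <= Defs.dist Y F1 + Defs.dist Y F2).
  { intros Y HY. destruct (Rle_or_lt s (Defs.dist Y F1 + Defs.dist Y F2)) as [h|h]; auto.
    pose proof (inside_strict F1 F2 P Q Y s sg Hsg Hl Hell h). rewrite HY in H. lra. }
  split; auto. split; auto.
  set (qx := fst (Q - P)%C) in *. set (qy := snd (Q - P)%C) in *.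
  set (l2 := qx^2 + qy^2) in *.
  set (c1 := cross (Q - P)%C (F1 - P)%C) in *.
  set (c2 := cross (Q - P)%C (F2 - P)%C) in *.
  set (k := 2 * c2 / l2).
  set (F2' := ((fst F2 + k * qy)%R, (snd F2 - k * qx)%R) : C).
  assert (Hrefl : forall Y, cross (Q - P)%C (Y - P)%C = 0 -> Defs.dist Y F2 = Defs.dist Y F2').
  { intros Y HY. unfold Defs.dist, Cmod. f_equal.
    assert (E : fst (Y - F2')%C ^ 2 + snd (Y - F2')%C ^ 2 = fst (Y - F2)%C ^ 2 + snd (Y - F2)%C ^ 2 + 2*k*cross (Q - P)%C (Y - P)%C).
    { unfold F2', k, c2, l2, qx, qy in *. destruct Y, F2, P, Q. unfold cross in *; cbv [Cplus Cminus Copp Cmult RtoC fst snd] in *. field. lra. }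
    rewrite E, HY. ring. }
  assert (Hc12 : 0 < c1 * c2).
  { assert (0 < (sg*c1)*(sg*c2)) by (apply Rmult_lt_0_compat; auto).
    assert (0 < sg^2) by (apply pow2_gt_0; auto). nra. }
  set (t := c1 / (c1 + c2)).
  assert (Ht : 0 < t < 1).
  { unfold t. destruct (Rlt_or_le 0 c1).
    - assert (0 < c2) by nra. split; [apply Rdiv_lt_0_compat; lra|]. apply (Rmult_lt_reg_r (c1+c2)); [lra|]. field_simplify; lra.
    - assert (c1 < 0) by (destruct H; [auto| subst; nra]). assert (c2 < 0) by nra.
      split.
      + replace (c1/(c1+c2)) with ((-c1)/(-(c1+c2))) by (field; lra). apply Rdiv_lt_0_compat; lra.
      + replace (c1/(c1+c2)) with ((-c1)/(-(c1+c2))) by (field; lra).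
        apply (Rmult_lt_reg_r (-(c1+c2))); [lra|]. field_simplify; lra. }
  assert (Hne : c1 + c2 <> 0) by (intro e; nra).
  set (Ys := (F1 + RtoC t * (F2' - F1))%C).
  assert (HYs : cross (Q - P)%C (Ys - P)%C = 0).
  { unfold Ys, t, F2', k, c1, c2, l2, qx, qy in *. destruct F1, F2, P, Q. unfold cross in *; cbv [Cplus Cminus Copp Cmult RtoC fst snd] in *.
    field. split; lra. }
  assert (Hsum : Defs.dist Ys F1 + Defs.dist Ys F2' = Cmod (F2' - F1)%C).
  { unfold Defs.dist.
    replace (Ys - F1)%C with (RtoC t * (F2' - F1))%C
      by (unfold Ys; destruct F1, F2'; cbv [Cplus Cminus Copp Cmult RtoC fst snd]; f_equal; ring).
    replace (Ys - F2')%C with (RtoC (t - 1) * (F2' - F1))%C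
      by (unfold Ys; destruct F1, F2'; cbv [Cplus Cminus Copp Cmult RtoC fst snd]; f_equal; ring).
    rewrite !Cmod_mult, !Cmod_R. rewrite Rabs_right by lra. rewrite Rabs_left by lra. ring. }
  assert (Hge : s <= Cmod (F2' - F1)%C).
  { rewrite <- Hsum, <- Hrefl by auto. apply Hline; auto. }
  assert (Hle : Cmod (F2' - F1)%C <= s).
  { unfold on_ellipse in HX0. rewrite Hrefl in HX0 by auto.
    replace (F2' - F1)%C with ((X0 - F1) + (F2' - X0))%C
      by (destruct X0, F1, F2'; cbv [Cplus Cminus Copp Cmult RtoC fst snd]; f_equal; ring).
    eapply Rle_trans. apply Cmod_triangle. unfold Defs.dist in HX0. rewrite (Cmod_sym F2' X0). lra. }
  assert (Heq : Cmod (F2' - F1)%C ^ 2 = s ^2) by (f_equal; lra).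
  rewrite Cmod_pos_sq in Heq. unfold Defs.dist. rewrite Cmod_pos_sq.
  rewrite <- Heq.
  unfold F2', k, c1, c2, l2, qx, qy in *. destruct F1, F2, P, Q. unfold cross in *; cbv [Cplus Cminus Copp Cmult RtoC fst snd] in *.
  field. lra.
Qed.


Definition sq (z : C) : R := fst z ^2 + snd z ^2.

Definition brocA (A B C0 : C) : C :=
  bary (sq (B - C0)%C * sq (A - B)%C) (sq (B - C0)%C * sq (C0 - A)%C) (sq (C0 - A)%C * sq (A - B)%C) A B C0.

Lemma acos_inj x y : -1 <= x <= 1 -> -1 <= y <= 1 -> acos x = acos y -> x = y.
Proof. intros Hx Hy E. rewrite <- (cos_acos x Hx), <- (cos_acos y Hy), E. auto. Qed.

Lemma angle_eq_ratio (V P Q V' P' Q' : C) :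
  0 < Cmod (P - V)%C -> 0 < Cmod (Q - V)%C -> 0 < Cmod (P' - V')%C -> 0 < Cmod (Q' - V')%C ->
  angle_at V P Q = angle_at V' P' Q' ->
  dot (P - V)%C (Q - V)%C * Rabs (cross (P' - V')%C (Q' - V')%C) =
  dot (P' - V')%C (Q' - V')%C * Rabs (cross (P - V)%C (Q - V)%C).
Proof.
  intros H1 H2 H3 H4 E. unfold angle_at in E.
  set (n := Cmod (P-V)%C) in *. set (m := Cmod (Q-V)%C) in *.
  set (n' := Cmod (P'-V')%C) in *. set (m' := Cmod (Q'-V')%C) in *.
  set (d := dot (P-V)%C (Q-V)%C) in *. set (c := cross (P-V)%C (Q-V)%C) in *.
  set (d' := dot (P'-V')%C (Q'-V')%C) in *. set (c' := cross (P'-V')%C (Q'-V')%C) in *.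
  assert (HL : d^2 + c^2 = n^2*m^2) by (unfold d, c, n, m; rewrite !Cmod_pos_sq; apply lagrange).
  assert (HL' : d'^2 + c'^2 = n'^2*m'^2) by (unfold d', c', n', m'; rewrite !Cmod_pos_sq; apply lagrange).
  pose proof (cos_bound_of n m d c H1 H2 HL) as B1.
  pose proof (cos_bound_of n' m' d' c' H3 H4 HL') as B2.
  assert (Ex := acos_inj _ _ B1 B2 E).
  assert (Hnm : 0 < n*m) by (apply Rmult_lt_0_compat; auto).
  assert (Hnm' : 0 < n'*m') by (apply Rmult_lt_0_compat; auto).
  assert (Ed : d * (n'*m') = d' * (n*m)).
  { apply (Rmult_eq_reg_r (/ (n*m*(n'*m')))). 2:{ apply Rinv_neq_0_compat. nra. }
    replace (d * (n'*m') * / (n*m*(n'*m'))) with (d/(n*m)) by (field; lra).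
    replace (d' * (n*m) * / (n*m*(n'*m'))) with (d'/(n'*m')) by (field; lra). auto. }
  assert (Ec2 : c^2 * (n'*m')^2 = c'^2 * (n*m)^2).
  { assert (d^2 * (n'*m')^2 = d'^2*(n*m)^2) by (rewrite <- !Rpow_mult_distr; rewrite Ed; auto).
    nra. }
  assert (Ec : Rabs c * (n'*m') = Rabs c' * (n*m)).
  { set (x := Rabs c * (n'*m')). set (y := Rabs c' * (n*m)).
    assert (0 <= x) by (apply Rmult_le_pos; [apply Rabs_pos | lra]).
    assert (0 <= y) by (apply Rmult_le_pos; [apply Rabs_pos | lra]).
    assert (x^2 = y^2).
    { unfold x, y. rewrite !Rpow_mult_distr, !pow2_abs. rewrite <- !Rpow_mult_distr. lra. }
    nra. }
  apply (Rmult_eq_reg_r (n*m)); [|lra].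
  transitivity (d * (Rabs c' * (n*m))). ring. rewrite <- Ec.
  transitivity (Rabs c * (d * (n'*m'))). ring. rewrite Ed. ring.
Qed.

Ltac crd := cbv [Cplus Cminus Copp Cmult RtoC fst snd dot cross sq] in *.

Lemma first_brocard_eq F A B C0 : nondegenerate A B C0 -> first_brocard_point F A B C0 -> F = brocA A B C0.
Proof.
  intros Hnd [[u [v [w [Hu [Hv [Hw [Hs HF]]]]]]] [E1 E2]].
  unfold nondegenerate in Hnd. set (S := cross (B - A)%C (C0 - A)%C) in *.
  assert (X1 : cross (F - A)%C (B - A)%C = - w * S).
  { unfold S. subst F. destruct A, B, C0. crd. replace u with (1 - v - w) by lra. ring. }
  assert (X2 : cross (F - B)%C (C0 - B)%C = - u * S).
  { unfold S. subst F. destruct A, B, C0. crd. replace w with (1 - u - v) by lra. ring. }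
  assert (X3 : cross (F - C0)%C (A - C0)%C = - v * S).
  { unfold S. subst F. destruct A, B, C0. crd. replace u with (1 - v - w) by lra. ring. }
  assert (Y1 : cross (C0 - B)%C (A - B)%C = S) by (unfold S; destruct A, B, C0; crd; ring).
  assert (Y2 : cross (A - C0)%C (B - C0)%C = S) by (unfold S; destruct A, B, C0; crd; ring).
  assert (nz : forall a, 0 < a -> - a * S <> 0) by (intros; apply Rmult_integral_contrapositive; split; lra).
  assert (N1 : 0 < Cmod (F - A)%C) by (apply (Cmod_pos_of_cross _ _ (B - A)%C); rewrite X1; auto).
  assert (N2 : 0 < Cmod (B - A)%C) by (apply (Cmod_pos_of_cross _ _ (C0 - A)%C); auto).
  assert (N3 : 0 < Cmod (F - B)%C) by (apply (Cmod_pos_of_cross _ _ (C0 - B)%C); rewrite X2; auto).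
  assert (N4 : 0 < Cmod (C0 - B)%C) by (apply (Cmod_pos_of_cross _ _ (A - B)%C); rewrite Y1; auto).
  assert (N5 : 0 < Cmod (F - C0)%C) by (apply (Cmod_pos_of_cross _ _ (A - C0)%C); rewrite X3; auto).
  assert (N6 : 0 < Cmod (A - C0)%C) by (apply (Cmod_pos_of_cross _ _ (B - C0)%C); rewrite Y2; auto).
  pose proof (angle_eq_ratio A F B B F C0 N1 N2 N3 N4 E1) as R1.
  pose proof (angle_eq_ratio B F C0 C0 F A N3 N4 N5 N6 E2) as R2.
  rewrite X1, X2 in R1. rewrite X2, X3 in R2.
  rewrite ?Rabs_mult, ?Rabs_Ropp in R1, R2.
  assert (Ru : Rabs u = u) by (apply Rabs_right; lra).
  assert (Rv : Rabs v = v) by (apply Rabs_right; lra).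
  assert (Rw : Rabs w = w) by (apply Rabs_right; lra).
  rewrite ?Ru, ?Rv, ?Rw in R1. rewrite ?Ru, ?Rv, ?Rw in R2.
  assert (HS : 0 < Rabs S) by (apply Rabs_pos_lt; auto).
  set (d1 := dot (F - A)%C (B - A)%C) in *.
  set (d2 := dot (F - B)%C (C0 - B)%C) in *.
  set (d3 := dot (F - C0)%C (A - C0)%C) in *.
  assert (R1' : d1 * u = d2 * w) by (apply (Rmult_eq_reg_r (Rabs S)); [first [rewrite !Rmult_assoc; exact R1 | nra] | lra]).
  assert (R2' : d2 * v = d3 * u) by (apply (Rmult_eq_reg_r (Rabs S)); [first [rewrite !Rmult_assoc; exact R2 | nra] | lra]).
  set (la := sq (B - C0)%C). set (lb := sq (C0 - A)%C). set (lc := sq (A - B)%C).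
  assert (Sd : d1 + d2 + d3 = (la + lb + lc)/2).
  { unfold d1, d2, d3, la, lb, lc. destruct A, B, C0, F. crd. field. }
  assert (D2 : d2 = u * ((la+lb+lc)/2)).
  { rewrite <- Sd. transitivity (d2 * (u + v + w)). rewrite Hs; ring.
    transitivity (d1*u + u*d2 + d3*u); [rewrite R1', <- R2'; ring | ring]. }
  assert (D1 : d1 = w * ((la+lb+lc)/2)).
  { apply (Rmult_eq_reg_r u); [|lra]. rewrite R1', D2. ring. }
  assert (Eq1 : w * la = u * lb).
  { assert (I : w * la - u * lb = d2 - u * ((la+lb+lc)/2)).
    { unfold d2, la, lb, lc. subst F. destruct A, B, C0. crd. replace v with (1 - u - w) by lra. field. }
    lra. }
  assert (Eq2 : v * lc = w * la).
  { assert (I : v * lc - w * la = d1 - w * ((la+lb+lc)/2)).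
    { unfold d1, la, lb, lc. subst F. destruct A, B, C0. crd. replace u with (1 - v - w) by lra. field. }
    lra. }
  set (W := la*lc + la*lb + lb*lc).
  assert (Wu : la*lc = W*u).
  { unfold W. transitivity (la*lc*(u+v+w)). rewrite Hs; ring.
    transitivity (u*la*lc + (v*lc)*la + w*la*lc). ring. rewrite Eq2.
    transitivity (u*la*lc + (w*la)*la + (w*la)*lc). ring. rewrite Eq1. ring. }
  assert (Wv : la*lb = W*v).
  { unfold W. transitivity (la*lb*(u+v+w)). rewrite Hs; ring.
    transitivity ((u*lb)*la + v*la*lb + (w*la)*lb). ring. rewrite <- Eq1, <- Eq2.
    ring. }
  assert (Ww : lb*lc = W*w).
  { unfold W. transitivity (lb*lc*(u+v+w)). rewrite Hs; ring.
    transitivity ((u*lb)*lc + (v*lc)*lb + w*lb*lc). ring. rewrite <- Eq1, Eq2. ring. }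
  assert (HW : W <> 0).
  { intro e. assert (0 < lb) by (unfold lb, sq; rewrite <- Cmod_pos_sq, Cmod_sym; apply pow2_gt_0; lra).
    assert (0 < lc) by (unfold lc, sq; rewrite <- Cmod_pos_sq, Cmod_sym; apply pow2_gt_0; lra).
    assert (0 < lb*lc) by (apply Rmult_lt_0_compat; auto). rewrite e in Ww. nra. }
  unfold brocA. fold la lb lc.
  replace (la*lc) with (W*u) by (rewrite Wu; ring).
  replace (la*lb) with (W*v) by (rewrite Wv; ring).
  replace (lb*lc) with (W*w) by (rewrite Ww; ring).
  rewrite bary_scale by lra.
  apply injective_projections; [rewrite bary_fst by lra | rewrite bary_snd by lra]; rewrite Hs; subst F; destruct A, B, C0; crd; field.
Qed.

Lemma second_brocard_eq F A B C0 : nondegenerate A B C0 -> second_brocard_point F A B C0 -> F = brocA A C0 B.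
Proof.
  intros Hnd [[u [v [w [Hu [Hv [Hw [Hs HF]]]]]]] [E1 E2]].
  apply first_brocard_eq.
  - unfold nondegenerate in *. destruct A, B, C0. crd. intro e. apply Hnd. lra.
  - split.
    + exists u, w, v. repeat split; try lra. subst F. destruct A, B, C0. crd. f_equal; ring.
    + split; congruence.
Qed.

Lemma X6_eq A B C0 : X6 A B C0 = bary (sq (B - C0)%C) (sq (C0 - A)%C) (sq (A - B)%C) A B C0.
Proof. unfold X6, Defs.dist. rewrite !Cmod_pos_sq. reflexivity. Qed.

Definition circ (A B C0 : C) : C :=
  let S := cross (B - A)%C (C0 - A)%C in
  (((fst A^2+snd A^2)*(snd B-snd C0) + (fst B^2+snd B^2)*(snd C0-snd A) + (fst C0^2+snd C0^2)*(snd A-snd B))/(2*S),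
   ((fst A^2+snd A^2)*(fst C0-fst B) + (fst B^2+snd B^2)*(fst A-fst C0) + (fst C0^2+snd C0^2)*(fst B-fst A))/(2*S)).

Lemma dist_sq X Y : Defs.dist X Y ^ 2 = sq (X - Y)%C.
Proof. unfold Defs.dist. apply Cmod_pos_sq. Qed.

Lemma circ_eq A B C0 O r : nondegenerate A B C0 -> Defs.dist A O = r -> Defs.dist B O = r -> Defs.dist C0 O = r ->
  O = circ A B C0.
Proof.
  intros Hnd HA HB HC.
  assert (E1 : sq (A - O)%C = sq (B - O)%C) by (rewrite <- !dist_sq; congruence).
  assert (E2 : sq (A - O)%C = sq (C0 - O)%C) by (rewrite <- !dist_sq; congruence).
  unfold nondegenerate, circ in *. destruct A as [a1 a2], B as [b1 b2], C0 as [c1 c2], O as [x y]. crd.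
  set (S := (b1 + - a1) * (c2 + - a2) - (b2 + - a2) * (c1 + - a1)) in *.
  f_equal.
  - apply (Rmult_eq_reg_r (2*S)); [|lra]. match goal with |- _ = ?Z / _ * _ => replace (Z / (2*S) * (2*S)) with Z by (field; lra) end.
    assert (I : x * (2*S) - ((a1 ^ 2 + a2 ^ 2) * (b2 - c2) + (b1 ^ 2 + b2 ^ 2) * (c2 - a2) + (c1 ^ 2 + c2 ^ 2) * (a2 - b2))
      = - ((c2 - a2) * ((b1 + - x) ^ 2 + (b2 + - y) ^ 2 - ((a1 + - x) ^ 2 + (a2 + - y) ^ 2))
      - (b2 - a2) * ((c1 + - x) ^ 2 + (c2 + - y) ^ 2 - ((a1 + - x) ^ 2 + (a2 + - y) ^ 2)))) by (unfold S; ring).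
    rewrite <- E1, <- E2 in I. ring_simplify in I. lra.
  - apply (Rmult_eq_reg_r (2*S)); [|lra]. match goal with |- _ = ?Z / _ * _ => replace (Z / (2*S) * (2*S)) with Z by (field; lra) end.
    assert (I : y * (2*S) - ((a1 ^ 2 + a2 ^ 2) * (c1 - b1) + (b1 ^ 2 + b2 ^ 2) * (a1 - c1) + (c1 ^ 2 + c2 ^ 2) * (b1 - a1))
      = - ((b1 - a1) * ((c1 + - x) ^ 2 + (c2 + - y) ^ 2 - ((a1 + - x) ^ 2 + (a2 + - y) ^ 2))
      - (c1 - a1) * ((b1 + - x) ^ 2 + (b2 + - y) ^ 2 - ((a1 + - x) ^ 2 + (a2 + - y) ^ 2)))) by (unfold S; ring).
    rewrite <- E1, <- E2 in I. ring_simplify in I. lra.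
Qed.


Lemma sq_pos_of_cross (a b z : C) : cross (b - a)%C z <> 0 -> 0 < sq (b - a)%C.
Proof. intros H. unfold sq. rewrite <- Cmod_pos_sq. apply pow2_gt_0. apply Rgt_not_eq. eapply Cmod_pos_of_cross; eauto. Qed.

Lemma sq_sym a b : sq (a - b)%C = sq (b - a)%C.
Proof. destruct a, b. unfold sq. crd. ring. Qed.

Lemma tri_sq_pos A B C0 : nondegenerate A B C0 ->
  0 < sq (B - C0)%C /\ 0 < sq (C0 - A)%C /\ 0 < sq (A - B)%C.
Proof.
  unfold nondegenerate. intros H.
  assert (H1 : cross (B - C0)%C (A - C0)%C <> 0) by (destruct A, B, C0; crd; intro e; apply H; lra).
  assert (H2 : cross (C0 - A)%C (B - A)%C <> 0) by (destruct A, B, C0; crd; intro e; apply H; lra).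
  assert (H3 : cross (A - B)%C (C0 - B)%C <> 0) by (destruct A, B, C0; crd; intro e; apply H; lra).
  split; [|split]; eapply sq_pos_of_cross; eauto.
Qed.

Lemma core (A0 B0 C0 : C) (beta n1 n2 c : R) :
  nondegenerate A0 B0 C0 ->
  beta * sq (C0 - B0)%C = cross (C0 - B0)%C (brocA A0 B0 C0 - B0)%C * cross (C0 - B0)%C (brocA A0 C0 B0 - B0)%C ->
  let F1 := brocA A0 B0 C0 in let F2 := brocA A0 C0 B0 in
  let O := circ A0 B0 C0 in let K := X6 A0 B0 C0 in
  let tau := (2*cross (B0 - A0)%C (C0 - A0)%C/(sq (B0 - C0)%C + sq (C0 - A0)%C + sq (A0 - B0)%C))^2 in
  (n1*fst K + n2*snd K - c)^2 - tau*(sq (A0 - O)%C*(n1^2+n2^2) - (n1*fst O+n2*snd O - c)^2)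
  - (1+tau)*((n1*fst F1+n2*snd F1 - c)*(n1*fst F2+n2*snd F2-c) - beta*(n1^2+n2^2)) = 0.
Proof.
  intros Hnd Hb F1 F2 O K tau.
  destruct (tri_sq_pos _ _ _ Hnd) as [Pa [Pb Pc]].
  set (la := sq (B0 - C0)%C) in *. set (lb := sq (C0 - A0)%C) in *. set (lc := sq (A0 - B0)%C) in *.
  assert (Ela : sq (C0 - B0)%C = la) by (unfold la; apply sq_sym).
  rewrite Ela in Hb.
  assert (Hbeta : beta = cross (C0 - B0)%C (F1 - B0)%C * cross (C0 - B0)%C (F2 - B0)%C / la).
  { unfold F1, F2. rewrite <- Hb. field. lra. }
  rewrite Hbeta. unfold F1, F2, O, K, tau. rewrite X6_eq. unfold brocA.
  assert (Elb : sq (A0 - C0)%C = lb) by (unfold lb; apply sq_sym).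
  assert (Elc : sq (B0 - A0)%C = lc) by (unfold lc; apply sq_sym).
  rewrite ?Ela, ?Elb, ?Elc. fold la lb lc.
  assert (0 < la*lc) by nra. assert (0 < la*lb) by nra. assert (0 < lb*lc) by nra.
  unfold cross at 1 2. unfold Cminus, Cplus, Copp. cbn [fst snd].
  rewrite !bary_fst, !bary_snd by nra.
  assert (Hnd' := Hnd). unfold nondegenerate in Hnd'.
  assert (HS : la + lb + lc <> 0) by lra.
  assert (Q1 : la * lc + la * lb + lb * lc <> 0) by lra.
  assert (Q2 : la * lb + la * lc + lc * lb <> 0) by lra.
  unfold circ. unfold la, lb, lc in *.
  destruct A0 as [a1 a2], B0 as [b1 b2], C0 as [c1 c2]. crd.
  field. repeat split; auto; lra.
Qed.


Lemma power_id (A B C1 O : C) (r2 w1 w2 w3 : R) :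
  sq (A - O)%C = r2 -> sq (B - O)%C = r2 -> sq (C1 - O)%C = r2 ->
  (w1*(fst A - fst O) + w2*(fst B - fst O) + w3*(fst C1 - fst O))^2
  + (w1*(snd A - snd O) + w2*(snd B - snd O) + w3*(snd C1 - snd O))^2
  = r2 * (w1+w2+w3)^2 - (w1*w2*sq (A - B)%C + w2*w3*sq (B - C1)%C + w3*w1*sq (C1 - A)%C).
Proof.
  intros HA HB HC.
  set (EA := sq (A - O)%C - r2). set (EB := sq (B - O)%C - r2). set (EC := sq (C1 - O)%C - r2).
  assert (I : (w1*(fst A - fst O) + w2*(fst B - fst O) + w3*(fst C1 - fst O))^2
  + (w1*(snd A - snd O) + w2*(snd B - snd O) + w3*(snd C1 - snd O))^2
  - (r2 * (w1+w2+w3)^2 - (w1*w2*sq (A - B)%C + w2*w3*sq (B - C1)%C + w3*w1*sq (C1 - A)%C))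
  = w1^2*EA + w2^2*EB + w3^2*EC + w1*w2*(EA+EB) + w2*w3*(EB+EC) + w3*w1*(EC+EA)).
  { unfold EA, EB, EC. destruct A, B, C1, O. unfold sq. cbv [Cplus Cminus Copp fst snd]. ring. }
  assert (EA = 0) by (unfold EA; lra). assert (EB = 0) by (unfold EB; lra). assert (EC = 0) by (unfold EC; lra).
  rewrite H, H0, H1 in I. lra.
Qed.

Lemma chord (P Q O : C) r2 : sq (P - O)%C = r2 -> sq (Q - O)%C = r2 ->
  r2 * sq (Q - P)%C - cross (Q - P)%C (O - P)%C ^2 = sq (Q - P)%C ^2 / 4.
Proof.
  intros HP HQ.
  assert (I : r2 * sq (Q - P)%C - cross (Q - P)%C (O - P)%C ^2 - sq (Q - P)%C ^2 / 4
     = (sq (P - O)%C - sq (Q - O)%C)^2/4 + (r2 - (sq (P - O)%C + sq (Q - O)%C)/2) * sq (Q - P)%C).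
  { destruct P, Q, O. unfold sq, cross. cbv [Cplus Cminus Copp fst snd]. field. }
  rewrite HP, HQ in I. lra.
Qed.

Lemma sign_lemma x y z k : 0 < k -> x^2 = k -> y^2 = k -> z^2 = k -> 0 < x*y + y*z + z*x -> x = y /\ x = z.
Proof.
  intros Hk Hx Hy Hz Hs.
  assert (E1 : (x - y)*(x + y) = 0) by nra.
  assert (E2 : (x - z)*(x + z) = 0) by nra.
  destruct (Rmult_integral _ _ E1) as [a|a]; destruct (Rmult_integral _ _ E2) as [b|b].
  - split; lra.
  - exfalso. assert (y = x) by lra. assert (z = -x) by lra. subst y z. nra.
  - exfalso. assert (y = -x) by lra. assert (z = x) by lra. subst y z. nra.
  - exfalso. assert (y = -x) by lra. assert (z = -x) by lra. subst y z. nra.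
Qed.

Lemma final_step (A B C1 O K : C) (r2 kap : R) :
  ccw A B C1 -> sq (A - O)%C = r2 -> sq (B - O)%C = r2 -> sq (C1 - O)%C = r2 -> sq (K - O)%C < r2 -> 0 < kap ->
  cross (C1 - B)%C (K - B)%C ^2 = kap * sq (C1 - B)%C ^2 ->
  cross (A - C1)%C (K - C1)%C ^2 = kap * sq (A - C1)%C ^2 ->
  cross (B - A)%C (K - A)%C ^2 = kap * sq (B - A)%C ^2 ->
  K = X6 A B C1.
Proof.
  intros Hccw HA HB HC HK Hkap E1 E2 E3.
  unfold ccw in Hccw. set (S := cross (B - A)%C (C1 - A)%C) in *.
  assert (Hnd : nondegenerate A B C1) by (unfold nondegenerate; fold S; lra).
  destruct (tri_sq_pos _ _ _ Hnd) as [Pa [Pb Pc]].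
  set (la := sq (B - C1)%C) in *. set (lb := sq (C1 - A)%C) in *. set (lc := sq (A - B)%C) in *.
  rewrite (sq_sym C1 B) in E1. rewrite (sq_sym A C1) in E2. rewrite (sq_sym B A) in E3. fold la lb lc in E1, E2, E3.
  set (al := cross (C1 - B)%C (K - B)%C) in *.
  set (be := cross (A - C1)%C (K - C1)%C) in *.
  set (ga := cross (B - A)%C (K - A)%C) in *.
  assert (Hsum : al + be + ga = S) by (unfold al, be, ga, S; destruct A, B, C1, K; unfold cross; cbv [Cplus Cminus Copp fst snd]; ring).
  assert (Hx : fst K * S = al * fst A + be * fst B + ga * fst C1)
    by (unfold al, be, ga, S; destruct A, B, C1, K; unfold cross; cbv [Cplus Cminus Copp fst snd]; ring).
  assert (Hy : snd K * S = al * snd A + be * snd B + ga * snd C1)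
    by (unfold al, be, ga, S; destruct A, B, C1, K; unfold cross; cbv [Cplus Cminus Copp fst snd]; ring).
  pose proof (power_id A B C1 O r2 al be ga HA HB HC) as P.
  rewrite Hsum in P. fold la lb lc in P.
  assert (P' : (al * (fst A - fst O) + be * (fst B - fst O) + ga * (fst C1 - fst O)) ^ 2 +
       (al * (snd A - snd O) + be * (snd B - snd O) + ga * (snd C1 - snd O)) ^ 2 = sq (K - O)%C * S^2).
  { replace (al * (fst A - fst O) + be * (fst B - fst O) + ga * (fst C1 - fst O)) with ((fst K - fst O) * S)
      by (rewrite Rmult_minus_distr_r, Hx, <- Hsum; ring).
    replace (al * (snd A - snd O) + be * (snd B - snd O) + ga * (snd C1 - snd O)) with ((snd K - snd O) * S)
      by (rewrite Rmult_minus_distr_r, Hy, <- Hsum; ring).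
    unfold sq. destruct K, O. cbv [Cplus Cminus Copp fst snd]. ring. }
  rewrite P' in P.
  assert (HS2 : 0 < S^2) by nra.
  assert (Hpos : 0 < al*be*lc + be*ga*la + ga*al*lb).
  { assert (sq (K - O)%C * S^2 < r2 * S^2) by (apply Rmult_lt_compat_r; auto). nra. }
  set (x := al / la). set (y := be / lb). set (z := ga / lc).
  assert (Eal : al = x * la) by (unfold x; field; lra).
  assert (Ebe : be = y * lb) by (unfold y; field; lra).
  assert (Ega : ga = z * lc) by (unfold z; field; lra).
  rewrite Eal in E1. rewrite Ebe in E2. rewrite Ega in E3.
  assert (Hx2 : x^2 = kap) by (apply (Rmult_eq_reg_r (la^2)); [nra | apply Rgt_not_eq; nra]).
  assert (Hy2 : y^2 = kap) by (apply (Rmult_eq_reg_r (lb^2)); [nra | apply Rgt_not_eq; nra]).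
  assert (Hz2 : z^2 = kap) by (apply (Rmult_eq_reg_r (lc^2)); [nra | apply Rgt_not_eq; nra]).
  assert (Hp2 : 0 < x*y + y*z + z*x).
  { rewrite Eal, Ebe, Ega in Hpos.
    assert (0 < la*lb*lc) by (repeat apply Rmult_lt_0_compat; auto).
    apply (Rmult_lt_reg_r (la*lb*lc)); auto. nra. }
  destruct (sign_lemma x y z kap Hkap Hx2 Hy2 Hz2 Hp2) as [Exy Exz].
  rewrite <- Exy in Ebe. rewrite <- Exz in Ega.
  assert (HSx : S = x * (la + lb + lc)) by (rewrite <- Hsum, Eal, Ebe, Ega; ring).
  assert (Hx0 : x <> 0) by (intro e; rewrite e in HSx; lra).
  rewrite X6_eq. fold la lb lc.
  apply injective_projections.
  - rewrite bary_fst by lra. apply (Rmult_eq_reg_r S); [|lra]. rewrite Hx, Eal, Ebe, Ega, HSx. field. lra.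
  - rewrite bary_snd by lra. apply (Rmult_eq_reg_r S); [|lra]. rewrite Hy, Eal, Ebe, Ega, HSx. field. lra.
Qed.


Lemma closed_sign X A B C0 : in_closed_triangle X A B C0 ->
  0 <= cross (B - A)%C (C0 - A)%C * cross (C0 - B)%C (X - B)%C.
Proof.
  intros [u [v [w [Hu [Hv [Hw [Hs HX]]]]]]].
  assert (E : cross (C0 - B)%C (X - B)%C = u * cross (B - A)%C (C0 - A)%C).
  { subst X. destruct A, B, C0. unfold cross. cbv [Cplus Cminus Copp Cmult RtoC fst snd].
    replace w with (1 - u - v) by lra. ring. }
  rewrite E. set (S := cross (B - A)%C (C0 - A)%C). nra.
Qed.

Lemma seg_cross X B C0 : on_segment X B C0 -> cross (C0 - B)%C (X - B)%C = 0.
Proof.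
  intros [t [Ht HX]]. subst X. destruct B, C0. unfold cross. cbv [Cplus Cminus Copp Cmult RtoC fst snd]. ring.
Qed.

Lemma side_tangent F1 F2 s A B C0 : nondegenerate A B C0 -> ellipse_inscribed F1 F2 s A B C0 ->
  4 * (cross (C0 - B)%C (F1 - B)%C * cross (C0 - B)%C (F2 - B)%C) = (s^2 - Defs.dist F1 F2 ^2) * sq (C0 - B)%C.
Proof.
  intros Hnd [Hd [Hin [[X [HX HXs]] _]]].
  destruct (tri_sq_pos _ _ _ Hnd) as [Pa _]. rewrite sq_sym in Pa.
  edestruct (tangency F1 F2 B C0 s (cross (B - A)%C (C0 - A)%C)) as [_ [_ T]]; auto.
  - intros X' HX'. apply closed_sign. auto.
  - exists X. split; auto. apply seg_cross; auto.
Qed.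

Lemma ell_rot F1 F2 s A B C0 : ellipse_inscribed F1 F2 s A B C0 -> ellipse_inscribed F1 F2 s B C0 A.
Proof.
  intros [Hd [Hin [H1 [H2 H3]]]]. split; auto. split; [|split; [|split]]; auto.
  intros X HX. destruct (Hin X HX) as [u [v [w [Hu [Hv [Hw [Hs E]]]]]]].
  exists v, w, u. repeat split; try lra. subst X. destruct A, B, C0. cbv [Cplus Cmult RtoC fst snd]. f_equal; ring.
Qed.

Lemma nd_rot A B C0 : nondegenerate A B C0 -> nondegenerate B C0 A.
Proof. unfold nondegenerate. destruct A, B, C0. unfold cross. cbv [Cplus Cminus Copp fst snd]. intros H e. apply H. lra. Qed.

Lemma ccw_rot A B C0 : ccw A B C0 -> ccw B C0 A.
Proof. unfold ccw. destruct A, B, C0. unfold cross. cbv [Cplus Cminus Copp fst snd]. intros H. lra. Qed.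

Lemma bary_rot w1 w2 w3 V1 V2 V3 : bary w1 w2 w3 V1 V2 V3 = bary w2 w3 w1 V2 V3 V1.
Proof.
  unfold bary. replace (w2 + w3 + w1) with (w1 + w2 + w3) by ring. f_equal.
  destruct V1, V2, V3. cbv [Cplus Cmult RtoC fst snd]. f_equal; ring.
Qed.

Lemma X6_rot A B C0 : X6 A B C0 = X6 B C0 A.
Proof. unfold X6. apply bary_rot. Qed.

Lemma side_K (A0 B0 C0 P Q : C) (beta : R) :
  nondegenerate A0 B0 C0 ->
  beta * sq (C0 - B0)%C = cross (C0 - B0)%C (brocA A0 B0 C0 - B0)%C * cross (C0 - B0)%C (brocA A0 C0 B0 - B0)%C ->
  sq (P - circ A0 B0 C0)%C = sq (A0 - circ A0 B0 C0)%C ->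
  sq (Q - circ A0 B0 C0)%C = sq (A0 - circ A0 B0 C0)%C ->
  cross (Q - P)%C (brocA A0 B0 C0 - P)%C * cross (Q - P)%C (brocA A0 C0 B0 - P)%C = beta * sq (Q - P)%C ->
  cross (Q - P)%C (X6 A0 B0 C0 - P)%C ^2 =
   ((2*cross (B0 - A0)%C (C0 - A0)%C/(sq (B0 - C0)%C + sq (C0 - A0)%C + sq (A0 - B0)%C))^2 / 4) * sq (Q - P)%C ^2.
Proof.
  intros Hnd Hb HP HQ Ht.
  pose proof (core A0 B0 C0 beta (- (snd Q - snd P)) (fst Q - fst P) ((- (snd Q - snd P)) * fst P + (fst Q - fst P) * snd P) Hnd Hb) as Hc.
  cbv zeta in Hc.
  set (F1 := brocA A0 B0 C0) in *. set (F2 := brocA A0 C0 B0) in *. set (O := circ A0 B0 C0) in *.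
  set (K := X6 A0 B0 C0) in *.
  set (tau := (2 * cross (B0 - A0)%C (C0 - A0)%C / (sq (B0 - C0)%C + sq (C0 - A0)%C + sq (A0 - B0)%C)) ^ 2) in *.
  set (r2 := sq (A0 - O)%C) in *.
  assert (L : forall Z : C, - (snd Q - snd P) * fst Z + (fst Q - fst P) * snd Z - (- (snd Q - snd P) * fst P + (fst Q - fst P) * snd P)
     = cross (Q - P)%C (Z - P)%C).
  { intros Z. destruct Z, P, Q. unfold cross. cbv [Cplus Cminus Copp fst snd]. ring. }
  rewrite !L in Hc.
  replace ((- (snd Q - snd P)) ^ 2 + (fst Q - fst P) ^ 2) with (sq (Q - P)%C) in Hc
    by (destruct P, Q; unfold sq; cbv [Cplus Cminus Copp fst snd]; ring).
  rewrite Ht in Hc.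
  pose proof (chord P Q O r2 HP HQ) as Ch.
  rewrite Ch in Hc. lra.
Qed.

Lemma K_inside A0 B0 C0 O r2 : nondegenerate A0 B0 C0 ->
  sq (A0 - O)%C = r2 -> sq (B0 - O)%C = r2 -> sq (C0 - O)%C = r2 ->
  sq (X6 A0 B0 C0 - O)%C < r2.
Proof.
  intros Hnd HA HB HC.
  destruct (tri_sq_pos _ _ _ Hnd) as [Pa [Pb Pc]].
  set (la := sq (B0 - C0)%C) in *. set (lb := sq (C0 - A0)%C) in *. set (lc := sq (A0 - B0)%C) in *.
  pose proof (power_id A0 B0 C0 O r2 la lb lc HA HB HC) as P. fold la lb lc in P.
  set (W := la + lb + lc).
  assert (HW : 0 < W) by (unfold W; lra).
  assert (E : sq (X6 A0 B0 C0 - O)%C * W^2 =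
    (la * (fst A0 - fst O) + lb * (fst B0 - fst O) + lc * (fst C0 - fst O)) ^ 2 +
    (la * (snd A0 - snd O) + lb * (snd B0 - snd O) + lc * (snd C0 - snd O)) ^ 2).
  { rewrite X6_eq. fold la lb lc. unfold sq at 1. unfold Cminus, Cplus, Copp. cbn [fst snd].
    rewrite bary_fst, bary_snd by lra. unfold W. field. lra. }
  rewrite P in E.
  assert (0 < la*lb*lc) by (repeat apply Rmult_lt_0_compat; auto).
  assert (0 < W^2) by nra.
  apply (Rmult_lt_reg_r (W^2)); auto. rewrite E. unfold W in *. nra.
Qed.

Theorem mainTheorem20 (A0 B0 C0 : C) (O : C) (r : R) (F1 F2 : C) (s : R) :
  nondegenerate A0 B0 C0 ->
  ~ equilateral A0 B0 C0 ->
  circumcircle O r A0 B0 C0 ->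
  brocard_inellipse F1 F2 s A0 B0 C0 ->
  forall A B C1 : C,
    in_brocard_porism O r F1 F2 s A B C1 ->
    ccw A B C1 ->
    angle_at A B C1 < 2 * PI / 3 ->
    angle_at B C1 A < 2 * PI / 3 ->
    angle_at C1 A B < 2 * PI / 3 ->
    collinear A (X15t (flank_a A B C1)) (X6 A0 B0 C0) /\
    collinear B (X15t (flank_b A B C1)) (X6 A0 B0 C0) /\
    collinear C1 (X15t (flank_c A B C1)) (X6 A0 B0 C0).
Proof.
  intros Hnd _ Hcirc [Hb1 [Hb2 Hell0]] A B C1 [HndT [HA [HB [HC HellT]]]] Hccw Ha1 Ha2 Ha3.
  pose proof (first_brocard_eq _ _ _ _ Hnd Hb1) as EF1.
  pose proof (second_brocard_eq _ _ _ _ Hnd Hb2) as EF2.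
  destruct Hcirc as [Hr [HA0 [HB0 HC0]]].
  pose proof (circ_eq _ _ _ _ _ Hnd HA0 HB0 HC0) as EO.
  assert (R : forall X, Defs.dist X O = r -> sq (X - O)%C = r^2) by (intros X HX; rewrite <- dist_sq, HX; auto).
  set (beta := (s^2 - Defs.dist F1 F2 ^2)/4).
  assert (Hb : beta * sq (C0 - B0)%C = cross (C0 - B0)%C (brocA A0 B0 C0 - B0)%C * cross (C0 - B0)%C (brocA A0 C0 B0 - B0)%C).
  { pose proof (side_tangent _ _ _ _ _ _ Hnd Hell0) as T. rewrite <- EF1, <- EF2. unfold beta. lra. }
  assert (Side : forall P Q Z, nondegenerate Z P Q -> ellipse_inscribed F1 F2 s Z P Q ->
     Defs.dist P O = r -> Defs.dist Q O = r ->
     cross (Q - P)%C (X6 A0 B0 C0 - P)%C ^2 =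
     ((2*cross (B0 - A0)%C (C0 - A0)%C/(sq (B0 - C0)%C + sq (C0 - A0)%C + sq (A0 - B0)%C))^2 / 4) * sq (Q - P)%C ^2).
  { intros P Q Z Hn He HP HQ. apply side_K with beta; auto.
    - rewrite <- EO. rewrite (R A0), (R P); auto.
    - rewrite <- EO. rewrite (R A0), (R Q); auto.
    - rewrite <- EF1, <- EF2. pose proof (side_tangent _ _ _ _ _ _ Hn He) as T. unfold beta. lra. }
  set (K := X6 A0 B0 C0) in *.
  set (kap := (2*cross (B0 - A0)%C (C0 - A0)%C/(sq (B0 - C0)%C + sq (C0 - A0)%C + sq (A0 - B0)%C))^2 / 4) in *.
  assert (Hkap : 0 < kap).
  { unfold kap. destruct (tri_sq_pos _ _ _ Hnd) as [Pa [Pb Pc]].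
    unfold nondegenerate in Hnd.
    assert (0 < (2 * cross (B0 - A0)%C (C0 - A0)%C / (sq (B0 - C0)%C + sq (C0 - A0)%C + sq (A0 - B0)%C)) ^ 2).
    { apply pow2_gt_0. apply Rmult_integral_contrapositive. split.
      - apply Rmult_integral_contrapositive. split; lra.
      - apply Rinv_neq_0_compat. lra. }
    lra. }
  assert (HKin : sq (K - O)%C < r^2).
  { unfold K. apply K_inside; auto. }
  assert (EK : K = X6 A B C1).
  { apply (final_step A B C1 O K (r^2) kap); auto.
    - apply (Side B C1 A); auto.
    - apply (Side C1 A B); auto. apply nd_rot; auto. apply ell_rot; auto.
    - apply (Side A B C1); auto. apply nd_rot, nd_rot; auto. apply ell_rot, ell_rot; auto. }
  rewrite EK. split; [|split].
  - apply flank_collinear; auto.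
  - change (flank_b A B C1) with (flank_a B C1 A). rewrite X6_rot. apply flank_collinear; auto. apply ccw_rot; auto.
  - change (flank_c A B C1) with (flank_a C1 A B). rewrite X6_rot, X6_rot. apply flank_collinear; auto.
    apply ccw_rot, ccw_rot; auto.
Qed.
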